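(* Let $X$ be a directed graph whose underlying undirected graph is a tree. Then $X$ is strongly $0$-hyperbolic.
   Context: Directed graphs may have loops and multiple edges. The underlying undirected graph of $X$ has the same vertices and a single undirected edge between $x$ and $y$ whenever $X$ has an edge from $x$ to $y$ or from $y$ to $x$. $d(u,v)$ is the length of a shortest directed path from $u$ to $v$ ($\infty$ if none). Out-ball $\overrightarrow{\mathcal{B}}_r(x)=\{y : d(x,y)\le r\}$, in-ball $\overleftarrow{\mathcal{B}}_r(x)=\{y : d(y,x)\le r\}$, extended to sets by union. A path $[x_0,\dots,x_n]$ is a geodesic if $n=d(x_0,x_n)$. A directed geodesic triangle is an ordered triple $(p,q,r)$ of geodesics with the end of $p$ equal to the start of $q$ and $p\circ q$ having the same start and end as $r$; it is $\delta$-thin if every vertex of $r$ lies in $\overrightarrow{\mathcal{B}}_\delta(p)\cup\overleftarrow{\mathcal{B}}_\delta(q)$, every vertex of $p$ lies in $\overrightarrow{\mathcal{B}}_\delta(r)\cup\overleftarrow{\mathcal{B}}_\delta(q)$, and every vertex of $q$ lies in $\overrightarrow{\mathcal{B}}_\delta(p)\cup\overleftarrow{\mathcal{B}}_\delta(r)$. A directed graph is strongly $\delta$-hyperbolic if all its directed geodesic triangles are $\delta$-thin. *)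

(* Defs.v *)
(* A directed graph (loops / multiple edges allowed) is modelled by
   its vertex type V and its adjacency relation E : V -> V -> Prop
   (E x y <-> there is at least one edge from x to y). *)
From Stdlib Require Import List.
Import ListNotations.

Fixpoint is_dpath {V : Type} (E : V -> V -> Prop) (p : list V) : Prop :=
  match p with
  | [] => False
  | [x] => True
  | x :: ((y :: _) as t) => E x y /\ is_dpath E t
  end.

(* p is a directed path from u to v (its length is length p - 1) *)
Definition path_from_to {V : Type} (E : V -> V -> Prop) (p : list V) (u v : V) : Prop :=
  is_dpath E p /\ hd_error p = Some u /\ last p u = v.

Definition dist_le {V : Type} (E : V -> V -> Prop) (u v : V) (r : nat) : Prop :=
  exists p, path_from_to E p u v /\ length p <= S r.

Definition geodesic {V : Type} (E : V -> V -> Prop) (p : list V) : Prop :=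
  exists u v, path_from_to E p u v /\
    forall q, path_from_to E q u v -> length p <= length q.

Definition out_ball {V : Type} (E : V -> V -> Prop) (r : nat) (A : list V) (y : V) : Prop :=
  exists a, In a A /\ dist_le E a y r.
Definition in_ball {V : Type} (E : V -> V -> Prop) (r : nat) (A : list V) (y : V) : Prop :=
  exists a, In a A /\ dist_le E y a r.

Definition geodesic_triangle {V : Type} (E : V -> V -> Prop) (p q r : list V) : Prop :=
  geodesic E p /\ geodesic E q /\ geodesic E r /\
  exists a b c, path_from_to E p a b /\ path_from_to E q b c /\ path_from_to E r a c.

Definition thin_triangle {V : Type} (E : V -> V -> Prop) (d : nat) (p q r : list V) : Prop :=
  (forall y, In y r -> out_ball E d p y \/ in_ball E d q y) /\
  (forall y, In y p -> out_ball E d r y \/ in_ball E d q y) /\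
  (forall y, In y q -> out_ball E d p y \/ in_ball E d r y).

Definition strongly_hyperbolic {V : Type} (E : V -> V -> Prop) (d : nat) : Prop :=
  forall p q r, geodesic_triangle E p q r -> thin_triangle E d p q r.

Definition und {V : Type} (E : V -> V -> Prop) (x y : V) : Prop := E x y \/ E y x.

(* a (simple) undirected graph given by a symmetric relation U is a tree:
   no loops, connected, and no cycle x0 - x1 - ... - x(k-1) - x0 with k >= 3
   distinct vertices *)
Definition is_tree {V : Type} (U : V -> V -> Prop) : Prop :=
  (forall x, ~ U x x) /\
  (forall x y, exists p, path_from_to U p x y) /\
  (forall x t, NoDup (x :: t) -> 2 <= length t -> is_dpath U (x :: t) ->
     ~ U (last t x) x).

(* Main.v *)
Require Import Defs.
From Stdlib Require Import List Lia Classical.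
Import ListNotations.

Inductive W {V : Type} (R : V -> V -> Prop) : V -> list V -> V -> Prop :=
| W1 : forall x, W R x [x] x
| WS : forall x y t v, R x y -> W R y t v -> W R x (x :: t) v.

Section G.
Context {V : Type} (R : V -> V -> Prop).

Lemma last_ne (y : V) t d d' : last (y :: t) d = last (y :: t) d'.
Proof. revert y. induction t as [|z t IH]; intros y; simpl; auto.
  destruct t; auto. apply (IH z). Qed.

Lemma pft_W p u v : path_from_to R p u v -> W R u p v.
Proof.
  revert u. induction p as [|x p IH]; intros u [H1 [H2 H3]]; simpl in *.
  - contradiction.
  - injection H2 as ->. destruct p as [|y t].
    + simpl in H3. subst. constructor.
    + destruct H1 as [Hxy Hp]. econstructor; [exact Hxy|]. apply IH.
      split; [exact Hp|]. split; [reflexivity|]. rewrite <- H3.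
      simpl. apply last_ne.
Qed.

Lemma W_pft p u v : W R u p v -> path_from_to R p u v.
Proof.
  induction 1 as [x|x y t v Hxy Hw IH].
  - split; simpl; auto.
  - destruct IH as [H1 [H2 H3]]. destruct t as [|z t]; [discriminate|].
    injection H2 as ->. split; [simpl; auto|]. split; [reflexivity|].
    rewrite <- H3. simpl. apply last_ne.
Qed.

Lemma W_hd u w v : W R u w v -> w = u :: tl w.
Proof. destruct 1; reflexivity. Qed.

Lemma W_last u w v : W R u w v -> forall d, last w d = v.
Proof. induction 1 as [x|x y t v Hxy Hw IH]; intros d; simpl; auto.
  rewrite (W_hd _ _ _ Hw). rewrite (W_hd _ _ _ Hw) in IH. apply IH. Qed.

Lemma W_in_last u w v : W R u w v -> In v w.
Proof. induction 1; simpl; auto. Qed.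

Lemma W_app a p b q c : W R a p b -> W R b q c -> W R a (p ++ tl q) c.
Proof.
  induction 1 as [x|x y t v Hxy Hw IH]; intros Hq.
  - simpl. rewrite <- (W_hd _ _ _ Hq). exact Hq.
  - simpl. econstructor; eauto.
Qed.

Lemma W_rev a p b : (forall x y, R x y -> R y x) -> W R a p b -> W R b (rev p) a.
Proof.
  intros Hs. induction 1 as [x|x y t v Hxy Hw IH].
  - constructor.
  - simpl. change (rev t ++ [x]) with (rev t ++ tl [y; x]).
    eapply W_app; [exact IH|]. econstructor; [apply Hs; exact Hxy|constructor].
Qed.

Lemma W_suffix l1 x l2 u v : W R u (l1 ++ x :: l2) v -> W R x (x :: l2) v.
Proof.
  revert u. induction l1 as [|z l1 IH]; intros u H; simpl in *.
  - pose proof (W_hd _ _ _ H) as E. injection E as ->. exact H.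
  - inversion H; subst.
    + destruct l1; discriminate.
    + eapply IH; eauto.
Qed.

Lemma W_len x t y : W R x t y -> x <> y -> 2 <= length t.
Proof. destruct 1 as [x|x y t v Hxy Hw]; intros Hne; [congruence|].
  rewrite (W_hd _ _ _ Hw). simpl. lia. Qed.

Lemma LE w x y : W R x w y -> exists w', W R x w' y /\ NoDup w' /\ incl w' w /\
  (w' = w \/ length w' < length w).
Proof.
  induction 1 as [x|x z t v Hxz Hw IH].
  - exists [x]. split; [constructor|]. split; [constructor; [simpl; tauto|constructor]|]. split; [apply incl_refl|left; reflexivity].
  - destruct IH as [w1 [H1 [H2 [H3 H4]]]].
    destruct (classic (In x w1)) as [Hin|Hin].
    + apply in_split in Hin. destruct Hin as [l1 [l2 ->]].
      exists (x :: l2). split; [eapply W_suffix; eauto|].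
      split; [apply NoDup_app_remove_l in H2; exact H2|].
      split.
      * intros q Hq. destruct Hq as [<-|Hq]; [left; auto|right].
        apply H3. apply in_or_app; right; right; exact Hq.
      * right. simpl. rewrite length_app in H4. simpl in H4.
        destruct H4 as [H4|H4]; [rewrite <- H4; rewrite length_app; simpl|]; lia.
    + exists (x :: w1). split; [econstructor; eauto|].
      split; [constructor; auto|]. split.
      * apply incl_cons; [left; auto|]. apply incl_tl; auto.
      * destruct H4 as [->|H4]; [left; auto|right; simpl; lia].
Qed.

Lemma LastOcc u w c a : W R u w c -> In a w -> a <> c ->
  exists y w2, R a y /\ W R y w2 c /\ ~ In a w2 /\ incl w2 w.
Proof.
  induction 1 as [x|x z t v Hxz Hw IH]; intros Ha Hne.
  - destruct Ha as [<-|[]]. congruence.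
  - destruct (classic (In a t)) as [Ht|Ht].
    + destruct (IH Ht Hne) as [y [w2 [A [B [C D]]]]].
      exists y, w2. repeat split; auto. apply incl_tl; auto.
    + destruct Ha as [<-|Ha]; [|contradiction].
      exists z, t. repeat split; auto. apply incl_tl, incl_refl.
Qed.

Lemma W_mono (R' : V -> V -> Prop) u w v : (forall x y, R x y -> R' x y) ->
  W R u w v -> W R' u w v.
Proof. intros Hm. induction 1; econstructor; eauto. Qed.

End G.

Lemma Key {V : Type} (U : V -> V -> Prop) :
  (forall x y, U x y -> U y x) ->
  (forall x t, NoDup (x :: t) -> 2 <= length t -> is_dpath U (x :: t) ->
     ~ U (last t x) x) ->
  forall s a c, W U a s c -> NoDup s -> forall w, W U a w c -> incl s w.
Proof.
  intros Hs Hc s a c Hsw. induction Hsw as [x|a x s' c Hax Hs' IH];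
    intros Hnd w Hw.
  - intros q [<-|[]]. rewrite (W_hd _ _ _ _ Hw). left; auto.
  - inversion Hnd as [|? ? Hna Hnd']; subst.
    assert (Hac : a <> c). { intros ->. apply Hna. eapply W_in_last; eauto. }
    assert (Haw : In a w). { rewrite (W_hd _ _ _ _ Hw). left; auto. }
    destruct (LastOcc _ _ _ _ _ Hw Haw Hac) as [y [w2 [A [B [C D]]]]].
    destruct (classic (y = x)) as [->|Hyx].
    + apply incl_cons; auto. apply incl_tran with w2; auto.
    + exfalso.
      pose proof (W_app _ _ _ _ _ _ Hs' (W_rev _ _ _ _ Hs B)) as Hxy.
      destruct (LE _ _ _ _ Hxy) as [t [T1 [T2 [T3 _]]]].
      assert (Hat : ~ In a t).
      { intros Ht. apply T3 in Ht. apply in_app_or in Ht. destruct Ht as [Ht|Ht].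
        - contradiction.
        - apply C. rewrite in_rev. destruct (rev w2); simpl in Ht; [contradiction|right; auto]. }
      apply (Hc a t).
      * constructor; auto.
      * eapply W_len; eauto.
      * apply (proj1 (W_pft U (a :: t) a y (WS U a x t y Hax T1))).
      * rewrite (W_last _ _ _ _ T1). apply Hs; auto.
Qed.

Lemma geo_nodup {V : Type} (E : V -> V -> Prop) p : geodesic E p -> NoDup p.
Proof.
  intros [u [v [Hp Hmin]]]. apply pft_W in Hp.
  destruct (LE _ _ _ _ Hp) as [w [W1' [W2 [_ [->|W4]]]]]; auto.
  apply W_pft in W1'. specialize (Hmin _ W1'). lia.
Qed.

Lemma ball0 {V : Type} (E : V -> V -> Prop) A y : In y A -> out_ball E 0 A y /\ in_ball E 0 A y.
Proof.
  intros H. assert (D : dist_le E y y 0).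
  { exists [y]. split; [split; simpl; auto|simpl; lia]. }
  split; exists y; auto.
Qed.

Lemma in_tl_rev {V : Type} (q : list V) y : In y (tl (rev q)) -> In y q.
Proof. intros H. apply in_rev. destruct (rev q); simpl in *; [contradiction|right; auto]. Qed.

Theorem proposition2p4 (V : Type) (E : V -> V -> Prop) :
  is_tree (und E) -> strongly_hyperbolic E 0.
Proof.
  intros [_ [_ Hc]] p q r [Gp [Gq [Gr [a [b [c [Hp [Hq Hr]]]]]]]].
  assert (Hs : forall x y, und E x y -> und E y x) by (unfold und; tauto).
  assert (Hm : forall x y, E x y -> und E x y) by (unfold und; tauto).
  apply pft_W in Hp, Hq, Hr.
  apply (W_mono _ (und E)) in Hp, Hq, Hr; auto.
  pose proof (Key _ Hs Hc) as K.
  split; [|split]; intros y Hy.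
  - pose proof (K _ _ _ Hr (geo_nodup _ _ Gr) _ (W_app _ _ _ _ _ _ Hp Hq) y Hy) as H.
    apply in_app_or in H. destruct H as [H|H].
    + left. apply ball0; auto.
    + right. apply ball0. destruct q; simpl in *; [contradiction|right; auto].
  - pose proof (K _ _ _ Hp (geo_nodup _ _ Gp) _
      (W_app _ _ _ _ _ _ Hr (W_rev _ _ _ _ Hs Hq)) y Hy) as H.
    apply in_app_or in H. destruct H as [H|H].
    + left. apply ball0; auto.
    + right. apply ball0. apply in_tl_rev; auto.
  - pose proof (K _ _ _ Hq (geo_nodup _ _ Gq) _
      (W_app _ _ _ _ _ _ (W_rev _ _ _ _ Hs Hp) Hr) y Hy) as H.
    apply in_app_or in H. destruct H as [H|H].
    + left. apply ball0. apply in_rev; auto.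
    + right. apply ball0. destruct r; simpl in *; [contradiction|right; auto].
Qed.
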